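(* The norm $A\mapsto n\,\omega(A)$ is the minimum element of the class of $M$-norms $\||\cdot\||$ on $\mathbb{M}_n$ satisfying $\|A\|_1\le\||A\||$ for all $A\in\mathbb{M}_n$.
   Context: $\mathbb{M}_n$ is the algebra of complex $n\times n$ matrices with identity $I$; $\|A\|_1=\mathrm{Tr}(|A|)$ is the trace norm and $\omega(A)=\sup\{|\langle x,Ax\rangle|:\|x\|=1\}$ the numerical radius. A norm $\||\cdot\||$ on $\mathbb{M}_n$ is an $M$-norm if $\left\||\sum_{i=1}^k C_i^*X_iC_i\right\||\le \max_{i}\||X_i\||$ for all $k$, all $X_i$ and all $C_i$ with $\sum_{i=1}^k C_i^*C_i=I$. *)

(* Defs.v *)
From HB Require Import structures.
From mathcomp Require Import all_boot all_order all_algebra.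
From mathcomp Require Import spectral.
From mathcomp Require Import complex.
From mathcomp Require Import boolp classical_sets reals.
From Stdlib Require Import ClassicalEpsilon.

Set Implicit Arguments.
Unset Strict Implicit.
Unset Printing Implicit Defensive.

Import Order.TTheory GRing.Theory Num.Theory.
Local Open Scope ring_scope.
Local Open Scope sesquilinear_scope.

Section Defs.
Variable R : realType.
Local Notation C := (R[i]).

Definition cmod (z : C) : R := Normc.normc z.

Definition psdmx n (P : 'M[C]_n) : Prop :=
  P ^t* = P /\ forall x : 'cV[C]_n, 0 <= (x ^t* *m P *m x) 0 0.

(* |A| := (A^* A)^{1/2}, the (unique) positive semidefinite square root of A^* A *)
Definition absmx n (A : 'M[C]_n) : 'M[C]_n :=
  epsilon (inhabits 0) (fun P => psdmx P /\ P *m P = A ^t* *m A).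

(* trace norm ||A||_1 = Tr |A| (a nonnegative real number) *)
Definition trnorm n (A : 'M[C]_n) : R := complex.Re (\tr (absmx A)).

Definition numrad n (A : 'M[C]_n) : R :=
  sup [set cmod ((x ^t* *m A *m x) 0 0) |
        x in [set x : 'cV[C]_n | (x ^t* *m x) 0 0 = 1]].

Definition is_mxnorm n (N : 'M[C]_n -> R) : Prop :=
  [/\ forall A, 0 <= N A,
      forall A, N A = 0 -> A = 0,
      forall (c : C) A, N (c *: A) = cmod c * N A
    & forall A B, N (A + B) <= N A + N B].

Definition is_Mnorm n (N : 'M[C]_n -> R) : Prop :=
  is_mxnorm N /\
  forall (k : nat) (X Cs : 'I_k -> 'M[C]_n),
    \sum_(i < k) (Cs i) ^t* *m Cs i = 1%:M ->
    N (\sum_(i < k) (Cs i) ^t* *m X i *m Cs i) <= \big[Num.max/0]_(i < k) N (X i).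

End Defs.

(* Main.v *)
Require Import Defs.
From HB Require Import structures.
From mathcomp Require Import all_boot all_order all_algebra.
From mathcomp Require Import spectral complex.
From mathcomp Require Import boolp classical_sets reals.
From mathcomp Require Import ring.
From Stdlib Require Import ClassicalEpsilon.
Import Order.TTheory GRing.Theory Num.Theory.
Local Open Scope ring_scope.
Local Open Scope sesquilinear_scope.
Local Open Scope complex_scope.
Local Open Scope ring_scope.

Set Implicit Arguments.
Unset Strict Implicit.
Unset Printing Implicit Defensive.

Section S.
Variable R : realType.
Local Notation C := (R[i]).

Lemma cmodE (z : C) : (cmod z)%:C = `|z|. Proof. by []. Qed.
Lemma cmod_ge0 (z : C) : 0 <= cmod z.
Proof. by have := normr_ge0 z; rewrite -cmodE -[0 : C]/((0:R)%:C) lecR. Qed.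
Lemma cmod_le (z w : C) : (cmod z <= cmod w) = (`|z| <= `|w|).
Proof. by rewrite -lecR !cmodE. Qed.
Lemma ReK (z : C) : 0 <= z -> (complex.Re z)%:C = z.
Proof. by move=> z0; apply: RRe_real; apply: ger0_real. Qed.
Lemma cmod_leR (z : C) (b : R) : (cmod z <= b) = (`|z| <= b%:C).
Proof. by rewrite -cmodE lecR. Qed.
Lemma cmodM (z w : C) : cmod (z * w) = cmod z * cmod w.
Proof. by apply: complexI; rewrite rmorphM /= !cmodE normrM. Qed.

Variable n : nat.
Implicit Types (A B X : 'M[C]_n) (x y : 'cV[C]_n).

Definition q A x : C := (x^t* *m A *m x) 0 0.
Definition nrm x : C := (x^t* *m x) 0 0.
Definition unitv x := nrm x = 1.

Lemma nrmE x : nrm x = \sum_i `|x i 0| ^+ 2.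
Proof. by rewrite /nrm !mxE; apply: eq_bigr => i _; rewrite !mxE normCKC. Qed.

Lemma nrm_ge0 x : 0 <= nrm x.
Proof. by rewrite nrmE sumr_ge0 // => i _; rewrite exprn_ge0. Qed.

Lemma unit_entry x i : unitv x -> `|x i 0| <= 1.
Proof.
move=> ux; rewrite -(@expr_le1 _ 2) //.
have := ux; rewrite /unitv nrmE (bigD1 i) //= => <-.
by rewrite lerDl sumr_ge0 // => j _; rewrite exprn_ge0.
Qed.

Lemma qE A x : q A x = \sum_j (\sum_i (x i 0)^* * A i j) * x j 0.
Proof. by rewrite /q !mxE; apply: eq_bigr => j _; rewrite !mxE; congr (_ * _); apply: eq_bigr => i _; rewrite !mxE. Qed.

Definition Kb A : C := \sum_j \sum_i `|A i j|.

Lemma q_bound A x : unitv x -> `|q A x| <= Kb A.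
Proof.
move=> ux; rewrite qE (le_trans (ler_norm_sum _ _ _)) //.
apply: ler_sum => j _; rewrite normrM.
rewrite (@le_trans _ _ `|\sum_i (x i 0)^* * A i j|) //.
  by rewrite ler_piMr ?unit_entry.
rewrite (le_trans (ler_norm_sum _ _ _)) //; apply: ler_sum => i _.
by rewrite normrM norm_conjC ler_piMl ?unit_entry.
Qed.

Definition Sq A := ([set cmod (q A x) | x in [set x : 'cV[C]_n | unitv x]])%classic.

Lemma numradE A : numrad A = sup (Sq A). Proof. by []. Qed.

Lemma Sq_ub A : has_ubound (Sq A).
Proof.
exists (complex.Re (Kb A)) => _ [x ux <-].
rewrite cmod_leR ReK ?q_bound //.
by rewrite sumr_ge0 // => j _; rewrite sumr_ge0.
Qed.

Lemma numrad_ub A x : unitv x -> cmod (q A x) <= numrad A.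
Proof. by move=> ux; rewrite numradE; apply: ub_le_sup; [apply: Sq_ub | exists x]. Qed.

Lemma numrad_le A b : 0 <= b -> (forall x, unitv x -> cmod (q A x) <= b) -> numrad A <= b.
Proof.
move=> b0 H; rewrite numradE; have [ne|e] := pselect (Sq A !=set0)%classic.
  by apply: ge_sup => // _ [x ux <-]; apply: H.
suff -> : Sq A = set0%classic by rewrite sup0.
by apply/seteqP; split => // y Sy; apply: e; exists y.
Qed.

Lemma numrad_ge0 A : 0 <= numrad A.
Proof.
rewrite numradE; have [[y Sy]|e] := pselect (Sq A !=set0)%classic.
  apply: le_trans (ub_le_sup (Sq_ub A) Sy); case: Sy => x _ <-; exact: cmod_ge0.
suff -> : Sq A = set0%classic by rewrite sup0.
by apply/seteqP; split => // y Sy; apply: e; exists y.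
Qed.

End S.
Section S2.
Variable R : realType.
Local Notation C := (R[i]).
Variable n : nat.
Implicit Types (A B X : 'M[C]_n) (x y : 'cV[C]_n).
Local Notation q := (@q R n).
Local Notation nrm := (@nrm R n).
Local Notation unitv := (@unitv R n).

Lemma qZ (c : C) A x : q (c *: A) x = c * q A x.
Proof. by rewrite /q -scalemxAr -scalemxAl mxE. Qed.

Lemma qD A B x : q (A + B) x = q A x + q B x.
Proof. by rewrite /q mulmxDr mulmxDl mxE. Qed.

Lemma q_sum (k : nat) (M : 'I_k -> 'M[C]_n) x :
  q (\sum_(i < k) M i) x = \sum_(i < k) q (M i) x.
Proof. by rewrite /q mulmx_sumr mulmx_suml summxE. Qed.

Lemma tr_mulC m p (M : 'M[C]_(m, n)) (N : 'M[C]_(n, p)) : (M *m N)^t* = N^t* *m M^t*.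
Proof. by rewrite trmx_mul map_mxM. Qed.

Lemma q_conj (Cm : 'M[C]_n) X x : q (Cm^t* *m X *m Cm) x = q X (Cm *m x).
Proof. by rewrite /q tr_mulC !mulmxA. Qed.

Lemma nrm_conj (Cm : 'M[C]_n) x : nrm (Cm *m x) = q (Cm^t* *m Cm) x.
Proof. by rewrite /q /nrm tr_mulC !mulmxA. Qed.

Lemma qZv A (c : C) x : q A (c *: x) = c^* * c * q A x.
Proof.
rewrite /q; have -> : (c *: x)^t* = c^* *: x^t*.
  by apply/matrixP => i j; rewrite !mxE rmorphM.
by rewrite -!scalemxAl -scalemxAr !mxE mulrA.
Qed.

Lemma nrm0 x : nrm x = 0 -> x = 0.
Proof.
rewrite nrmE => /psumr_eq0P H; apply/matrixP => i j; rewrite ord1 mxE.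
have /eqP := H (fun _ _ => exprn_ge0 _ (normr_ge0 _)) i isT.
by rewrite expf_eq0 /= normr_eq0 => /eqP.
Qed.

Lemma q0v A : q A 0 = 0.
Proof. by rewrite /q mulmx0 mxE. Qed.

Lemma normalize x : nrm x != 0 ->
  exists2 z, unitv z & (forall A, q A x = nrm x * q A z).
Proof.
move=> nx; set s := nrm x; have s0 : 0 <= s by apply: nrm_ge0.
set t := sqrtC s; have t0 : 0 < t by rewrite sqrtC_gt0 lt_def nx.
have tc : t^-1^* = t^-1 by rewrite geC0_conj // invr_ge0 ltW.
have tt : t ^+ 2 = s by rewrite sqrtCK.
exists (t^-1 *: x).
  rewrite /unitv /nrm; have -> : (t^-1 *: x)^t* = t^-1^* *: x^t*.
    by apply/matrixP => i j; rewrite !mxE rmorphM.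
  rewrite -scalemxAl -scalemxAr mxE [X in _ * X]mxE.
  rewrite -/(nrm x) -/s tc mulrA -expr2 exprVn tt mulVf //.
move=> A; rewrite qZv tc -expr2 exprVn tt mulrA mulfV ?mul1r //.
Qed.
End S2.
Section S3.
Variable R : realType.
Local Notation C := (R[i]).
Variable n : nat.
Implicit Types (A B X : 'M[C]_n) (x y u v : 'cV[C]_n).
Local Notation q := (@q R n).
Local Notation nrm := (@nrm R n).
Local Notation unitv := (@unitv R n).

Lemma cmod_ge0R (z : C) : 0 <= z -> cmod z = complex.Re z.
Proof. by move=> z0; apply: complexI; rewrite cmodE ReK // ger0_norm. Qed.

Lemma cmod0 : cmod (0 : C) = 0.
Proof. by apply: complexI; rewrite cmodE normr0. Qed.

Lemma cmod1 : cmod (1 : C) = 1.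
Proof. by apply: complexI; rewrite cmodE normr1. Qed.

Lemma cmod_eq0 (z : C) : cmod z = 0 -> z = 0.
Proof. by move=> h; apply/eqP; rewrite -normr_eq0 -cmodE h. Qed.

Lemma q_le_numrad X y : cmod (q X y) <= numrad X * complex.Re (nrm y).
Proof.
have [/eqP ny|ny] := boolP (nrm y == 0).
  by rewrite ny (nrm0 ny) q0v cmod0 /= mulr0.
have [z uz ->] := normalize ny.
rewrite cmodM cmod_ge0R ?nrm_ge0 // mulrC ler_wpM2r ?numrad_ub //.
by rewrite -cmod_ge0R ?nrm_ge0 // cmod_ge0.
Qed.

Lemma numradZ (c : C) A : numrad (c *: A) = cmod c * numrad A.
Proof.
have le1 : forall c A, numrad (c *: A) <= cmod c * numrad A.
  move=> c' A'; apply: numrad_le; first by rewrite mulr_ge0 ?cmod_ge0 ?numrad_ge0.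
  by move=> x ux; rewrite qZ cmodM ler_wpM2l ?cmod_ge0 ?numrad_ub.
apply/eqP; rewrite eq_le le1 /=.
have [->|c0] := eqVneq c 0; first by rewrite cmod0 mul0r numrad_ge0.
have := le1 c^-1 (c *: A); rewrite scalerA mulVf // scale1r => h.
rewrite -[numrad (c *: A)]mul1r -(cmod1) -(mulfV c0) cmodM -mulrA.
by rewrite ler_wpM2l ?cmod_ge0.
Qed.

Lemma numradD A B : numrad (A + B) <= numrad A + numrad B.
Proof.
apply: numrad_le; first by rewrite addr_ge0 ?numrad_ge0.
move=> x ux; rewrite qD; apply: le_trans (lerD (numrad_ub A ux) (numrad_ub B ux)).
by rewrite -lecR rmorphD /= !cmodE ler_normD.
Qed.

Definition Bf A u v : C := (u^t* *m A *m v) 0 0.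

Lemma trC_add u v : (u + v)^t* = u^t* + v^t*.
Proof. by apply/matrixP => i j; rewrite !mxE rmorphD. Qed.
Lemma trC_scale (c : C) u : (c *: u)^t* = c^* *: u^t*.
Proof. by apply/matrixP => i j; rewrite !mxE rmorphM. Qed.

Lemma q_expand A u v (c : C) :
  q A (u + c *: v) = q A u + c * Bf A u v + c^* * Bf A v u + c^* * c * q A v.
Proof.
rewrite /q /Bf trC_add trC_scale !mulmxDl !mulmxDr -!scalemxAl -!scalemxAr.
by rewrite !mxE !addrA mulrA.
Qed.

Lemma polar A : (forall x, q A x = 0) -> A = 0.
Proof.
move=> H; apply/matrixP => i j; rewrite mxE.
set u := (delta_mx i 0 : 'cV[C]_n); set v := (delta_mx j 0 : 'cV[C]_n).
have E : Bf A u v = A i j.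
  rewrite /Bf (_ : u^t* = delta_mx 0 i); last first.
    by apply/matrixP => a b; rewrite !mxE rmorph_nat andbC.
  by rewrite -rowE -colE !mxE.
have h1 := q_expand A u v 1; have h2 := q_expand A u v 'i.
rewrite !H conjC1 !mul1r ?mulr0 add0r addr0 in h1.
rewrite !H conjCi mulr0 add0r addr0 in h2.
have e1 : Bf A v u = - Bf A u v by apply/eqP; rewrite -addr_eq0 addrC -h1.
rewrite e1 mulrN mulNr opprK -mulrDr in h2.
apply/eqP; rewrite -E; move/eqP: h2; rewrite eq_sym mulf_eq0 (negbTE (neq0Ci _)) /=.
by rewrite -mulr2n mulrn_eq0 /=.
Qed.

Lemma numrad_eq0 A : numrad A = 0 -> A = 0.
Proof.
move=> h; apply: polar => x; apply: cmod_eq0; apply/eqP; rewrite eq_le cmod_ge0 andbT.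
by rewrite (le_trans (q_le_numrad A x)) // h mul0r.
Qed.
End S3.
Section S4.
Variable R : realType.
Local Notation C := (R[i]).
Variable n : nat.
Implicit Types (A B X : 'M[C]_n) (x y u v : 'cV[C]_n).
Local Notation q := (@q R n).
Local Notation nrm := (@nrm R n).
Local Notation unitv := (@unitv R n).

Lemma cmod_sum k (F : 'I_k -> C) : cmod (\sum_i F i) <= \sum_i cmod (F i).
Proof.
rewrite -lecR rmorph_sum /= cmodE; apply: le_trans (ler_norm_sum _ _ _) _.
by apply: ler_sum => i _; rewrite cmodE.
Qed.

Lemma bigmax_ge0 k (F : 'I_k -> R) : 0 <= \big[Num.max/0]_(i < k) F i.
Proof. by elim/big_rec: _ => // i a _ a0; rewrite le_max a0 orbT. Qed.

Lemma numrad_M k (X Cs : 'I_k -> 'M[C]_n) :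
  \sum_(i < k) (Cs i)^t* *m Cs i = 1%:M ->
  numrad (\sum_(i < k) (Cs i)^t* *m X i *m Cs i) <= \big[Num.max/0]_(i < k) numrad (X i).
Proof.
move=> hC; set M := \big[Num.max/0]_(i < k) numrad (X i).
apply: numrad_le; first exact: bigmax_ge0.
move=> x ux; rewrite q_sum; apply: le_trans (cmod_sum _) _.
under eq_bigr => i _ do rewrite q_conj.
apply: (@le_trans _ _ (\sum_i M * complex.Re (nrm (Cs i *m x)))).
  apply: ler_sum => i _; apply: le_trans (q_le_numrad _ _) _.
  rewrite ler_wpM2r //; last exact: le_bigmax.
  by rewrite -cmod_ge0R ?nrm_ge0 // cmod_ge0.
rewrite -mulr_sumr -raddf_sum /=.
under eq_bigr => i _ do rewrite nrm_conj.
by rewrite -q_sum hC /q mulmx1 -/(nrm x) ux mulr1.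
Qed.
End S4.
Section S5.
Variable R : realType.
Local Notation C := (R[i]).
Variable n : nat.
Implicit Types (A B X P W : 'M[C]_n) (x y u v : 'cV[C]_n).
Local Notation q := (@q R n).
Local Notation nrm := (@nrm R n).
Local Notation unitv := (@unitv R n).

Lemma normal_spec P : P *m P^t* = P^t* *m P ->
  exists W, exists e : 'rV[C]_n,
   [/\ W^t* *m W = 1%:M, W *m W^t* = 1%:M & P = W *m diag_mx e *m W^t*].
Proof.
move=> hP; have Pn : P \is normalmx by rewrite qualifE hP.
have := orthomx_spectralP Pn; set V := spectralmx P; set d := spectral_diag P.
have Vu : V \is unitarymx := spectral_unitarymx P.
rewrite invmx_unitary // => hE.
exists (V^t*), d; split.
- by rewrite trmxCK; apply/unitarymxP.
- by rewrite trmxCK; apply: mulmx1C; apply/unitarymxP.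
- by rewrite trmxCK.
Qed.

Lemma col_tr W j : (col j W)^t* = row j (W^t*).
Proof. by apply/matrixP => a b; rewrite !mxE. Qed.

Lemma entry_q P W j : q P (col j W) = (W^t* *m P *m W) j j.
Proof.
rewrite /q !mxE; apply: eq_bigr => b _; rewrite !mxE; congr (_ * _).
by apply: eq_bigr => a _; rewrite !mxE.
Qed.

Lemma unit_col W j : W^t* *m W = 1%:M -> unitv (col j W).
Proof.
move=> hW; rewrite /unitv /nrm.
have := entry_q 1%:M W j; rewrite /q mulmx1 => ->; rewrite mulmx1 hW.
by rewrite !mxE eqxx.
Qed.

Lemma spec_diag P W (e : 'rV[C]_n) j : W^t* *m W = 1%:M ->
  P = W *m diag_mx e *m W^t* -> e 0 j = q P (col j W).
Proof.
move=> hW hP; rewrite entry_q hP !mulmxA hW mul1mx -mulmxA hW mulmx1.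
by rewrite !mxE eqxx mulr1n.
Qed.

Lemma trace_spec P W (e : 'rV[C]_n) : W^t* *m W = 1%:M ->
  P = W *m diag_mx e *m W^t* -> \tr P = \sum_j e 0 j.
Proof.
by move=> hW ->; rewrite mxtrace_mulC mulmxA hW mul1mx mxtrace_diag.
Qed.
End S5.
Section S6.
Variable R : realType.
Local Notation C := (R[i]).
Variable n : nat.
Local Notation q := (@q R n).
Local Notation nrm := (@nrm R n).
Local Notation unitv := (@unitv R n).

Lemma trC_mulE (M N : 'M[C]_n) i j : (M^t* *m N) i j = \sum_a (M a i)^* * N a j.
Proof. by rewrite !mxE; apply: eq_bigr => a _; rewrite !mxE. Qed.

Lemma polar_aux m : forall (B : 'M[C]_n) (d : 'I_n -> C),
  #|[pred k | d k == 0]| = m ->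
  (forall j, 0 <= d j) ->
  (forall i j, (B^t* *m B) i j = (i == j)%:R * d i ^+ 2) ->
  exists U : 'M[C]_n, U^t* *m U = 1%:M /\ (forall i j, B i j = U i j * d j).
Proof.
elim: m => [|m IH] B d hc d0 hB.
  have dn0 : forall k, d k != 0.
    by move=> k; have := card0_eq hc k; rewrite !inE => ->.
  exists (\matrix_(i, j) (B i j / d j)); split; last first.
    by move=> i j; rewrite mxE divfK.
  apply/matrixP => i j; rewrite trC_mulE.
  under eq_bigr => a _ do rewrite !mxE rmorphM /= fmorphV /= (geC0_conj (d0 i)).
  have -> : \sum_a (B a i)^* / d i * (B a j / d j) = (B^t* *m B) i j / (d i * d j).
    rewrite trC_mulE mulr_suml; apply: eq_bigr => a _.
    by rewrite invfM; ring.
  rewrite hB !mxE; case: eqP => [->|_]; last by rewrite !mul0r.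
  by rewrite mul1r expr2 mulfV // mulf_neq0.
have [j0 j0z] : exists j0, d j0 == 0.
  have : (0 < #|[pred k | d k == 0%R]|)%N by rewrite hc.
  by case/card_gt0P => j0; rewrite inE => h; exists j0.
move/eqP: j0z => j0z.
have colz : forall a, B a j0 = 0.
  move=> a; have h0 : \sum_k (B k j0)^* * B k j0 = 0.
    by rewrite -trC_mulE hB j0z expr2 !mulr0.
  have hge : forall k, true -> 0 <= (B k j0)^* * B k j0.
    by move=> k _; rewrite -normCKC exprn_ge0.
  by apply/eqP; rewrite -normr_eq0 -sqrf_eq0 normCKC (psumr_eq0P hge h0).
have nunit : B \notin unitmx.
  apply/negP => Bu.
  have : B *m delta_mx j0 (0 : 'I_1) = 0.
    by apply/matrixP => a b; rewrite -colE !mxE colz.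
  move=> /(congr1 (mulmx (invmx B))); rewrite mulKmx // mulmx0 => /matrixP /(_ j0 0).
  by rewrite !mxE !eqxx /= => /eqP; rewrite oner_eq0.
have : kermx B != 0 by rewrite kermx_eq0 row_free_unit.
case/rowV0Pn => v /sub_kermxP vB vn0.
set z := v^t*.
have zB : forall k, \sum_a (B a k)^* * z a 0 = 0.
  move=> k; have := congr1 (fun M => (M^t*) k 0) vB.
  rewrite /= tr_mulC !mxE conjC0 => h; apply: (etrans _ h).
  by apply: eq_bigr => a _; rewrite !mxE.
have nz : nrm z != 0.
  apply/eqP => /nrm0 z0; move/eqP: vn0; apply.
  by rewrite -[v]trmxCK -/z z0; apply/matrixP => a b; rewrite !mxE conjC0.
set t := sqrtC (nrm z); have t0 : 0 < t by rewrite sqrtC_gt0 lt_def nz nrm_ge0.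
have tc : t^-1^* = t^-1 by rewrite geC0_conj // invr_ge0 ltW.
set y := t^-1 *: z.
have uy : unitv y.
  rewrite /unitv /nrm; have -> : y^t* = t^-1^* *: z^t*.
    by apply/matrixP => a b; rewrite !mxE rmorphM.
  rewrite -scalemxAl -scalemxAr mxE [X in _ * X]mxE.
  by rewrite -/(nrm z) tc mulrA -expr2 exprVn sqrtCK mulVf.
have yB : forall k, \sum_a (B a k)^* * y a 0 = 0.
  move=> k; have := congr1 (fun s => t^-1 * s) (zB k).
  rewrite /= mulr0 mulr_sumr => h; apply: (etrans _ h); apply: eq_bigr => a _.
  by rewrite mxE mulrCA.
pose B' := \matrix_(a, k) (if k == j0 then y a 0 else B a k).
pose d' := fun k => if k == j0 then 1 else d k.
have h1 : #|[pred k | d' k == 0]| = m.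
  rewrite -[m]/(m.+1.-1) -hc (cardD1 j0 [pred k | d k == 0]) inE /= j0z eqxx /=.
  apply: eq_card => k; rewrite !inE /d'.
  by have [->|kj] := eqVneq k j0; rewrite /= ?oner_eq0.
have h2 : forall k, 0 <= d' k.
  by move=> k; rewrite /d'; case: eqP => _ //; rewrite ler01.
have h3 : forall i j, (B'^t* *m B') i j = (i == j)%:R * d' i ^+ 2.
  move=> i j; rewrite trC_mulE /d'.
  case: (eqVneq i j0) => [->|ij0]; case: (eqVneq j j0) => [->|jj0].
  + rewrite mul1r expr1n; have := uy; rewrite /unitv /nrm !mxE => h.
    apply: (etrans _ h); by apply: eq_bigr => a _; rewrite !mxE eqxx.
  + rewrite mul0r.
    under eq_bigr => a _ do rewrite !mxE eqxx (negbTE jj0).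
    rewrite -[RHS]conjC0; apply: (etrans _ (congr1 Num.conj (yB j))).
    rewrite rmorph_sum; apply: eq_bigr => a _.
    by rewrite rmorphM /= conjCK mulrC /y !mxE.
  + rewrite (negbTE ij0) mul0r; apply: (etrans _ (yB i)); apply: eq_bigr => a _.
    by rewrite !mxE eqxx (negbTE ij0).
  + rewrite -hB trC_mulE; apply: eq_bigr => a _.
    by rewrite !mxE (negbTE ij0) (negbTE jj0).
have [U [hU hUB]] := IH B' d' h1 h2 h3.
exists U; split => // i j; have := hUB i j; rewrite /d' mxE.
case: eqP => [->|_] // _; by rewrite colz j0z mulr0.
Qed.
End S6.
Section S7.
Variable R : realType.
Local Notation C := (R[i]).
Variable n : nat.
Implicit Types (A B X P W : 'M[C]_n) (x y u v : 'cV[C]_n).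
Local Notation q := (@q R n).
Local Notation nrm := (@nrm R n).
Local Notation unitv := (@unitv R n).

Lemma diag_sq W (e : 'rV[C]_n) : W^t* *m W = 1%:M ->
  (W *m diag_mx e *m W^t*) *m (W *m diag_mx e *m W^t*) =
  W *m diag_mx (\row_j (e 0 j * e 0 j)) *m W^t*.
Proof.
move=> hW; rewrite !mulmxA -[W *m _ *m W^t* *m W]mulmxA hW mulmx1.
by rewrite -[W *m _ *m diag_mx e]mulmxA mulmx_diag.
Qed.

Lemma sqrt_exists A : exists P, psdmx P /\ P *m P = A^t* *m A.
Proof.
have hn : (A^t* *m A) *m (A^t* *m A)^t* = (A^t* *m A)^t* *m (A^t* *m A).
  by rewrite tr_mulC trmxCK.
have [W [e [hW1 hW2 hE]]] := normal_spec hn.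
have e0 : forall j, 0 <= e 0 j.
  move=> j; rewrite (spec_diag j hW1 hE) -nrm_conj; exact: nrm_ge0.
pose s := \row_j sqrtC (e 0 j).
have sc : forall j, (s 0 j)^* = s 0 j.
  by move=> j; rewrite mxE geC0_conj // sqrtC_ge0.
exists (W *m diag_mx s *m W^t*); split; last first.
  rewrite diag_sq // hE; congr (_ *m diag_mx _ *m _); apply/rowP => j.
  by rewrite !mxE -expr2 sqrtCK.
split.
  rewrite !tr_mulC trmxCK mulmxA; congr (_ *m _ *m _).
  rewrite tr_diag_mx map_diag_mx; congr diag_mx; apply/rowP => j.
  by rewrite [LHS]mxE; exact: (sc j).
move=> x; rewrite -/(q _ x) -{1}[W]trmxCK q_conj.
set z := W^t* *m x; rewrite /q mul_mx_diag !mxE sumr_ge0 // => j _.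
rewrite [X in X * _]mxE mulrAC (_ : (z^t*) 0 j = (z j 0)^*); last by rewrite !mxE.
by rewrite -normCKC mulr_ge0 ?exprn_ge0 // /s mxE sqrtC_ge0.
Qed.

Lemma absmx_spec A : psdmx (absmx A) /\ absmx A *m absmx A = A^t* *m A.
Proof. exact: (epsilon_spec (inhabits (0:'M[C]_n)) (fun P => psdmx P /\ P *m P = A^t* *m A) (sqrt_exists A)). Qed.
End S7.
Section S8.
Variable R : realType.
Local Notation C := (R[i]).
Variable n : nat.
Implicit Types (A B X P W : 'M[C]_n) (x y u v : 'cV[C]_n).
Local Notation q := (@q R n).
Local Notation nrm := (@nrm R n).
Local Notation unitv := (@unitv R n).

Lemma psd_spec P : psdmx P -> exists W, exists e : 'rV[C]_n,
  [/\ W^t* *m W = 1%:M, W *m W^t* = 1%:M, P = W *m diag_mx e *m W^t* & forall j, 0 <= e 0 j].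
Proof.
move=> [hP hpos]; have hn : P *m P^t* = P^t* *m P by rewrite hP.
have [W [e [hW1 hW2 hE]]] := normal_spec hn.
by exists W, e; split => // j; rewrite (spec_diag j hW1 hE); apply: hpos.
Qed.

Lemma conj_sandwich W (D : 'M[C]_n) : W^t* *m W = 1%:M ->
  W^t* *m (W *m D *m W^t*) *m W = D.
Proof. by move=> hW; rewrite !mulmxA hW mul1mx -mulmxA hW mulmx1. Qed.

Lemma tr_diag_mul (d : 'rV[C]_n) M : \tr (diag_mx d *m M) = \sum_j d 0 j * M j j.
Proof. by rewrite mul_diag_mx /mxtrace; apply: eq_bigr => j _; rewrite mxE. Qed.

Lemma trnorm_le A : trnorm A <= n%:R * numrad A.
Proof.
have [Ppsd P2] := absmx_spec A; move: Ppsd P2; set P := absmx A => Ppsd P2.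
have [W [e [hW1 hW2 hE e0]]] := psd_spec Ppsd.
set B := A *m W.
have BB : B^t* *m B = diag_mx (\row_j (e 0 j * e 0 j)).
  rewrite /B tr_mulC mulmxA -[W^t* *m A^t* *m A]mulmxA -P2 {1 2}hE diag_sq //.
  by rewrite conj_sandwich.
have hB : forall i j, (B^t* *m B) i j = (i == j)%:R * e 0 i ^+ 2.
  by move=> i j; rewrite BB !mxE expr2 mulr_natl.
have [U [hU hUB]] := @polar_aux R n _ B (fun j => e 0 j) (erefl _) e0 hB.
have AW : A *m W = U *m diag_mx e.
  by apply/matrixP => i j; rewrite mul_mx_diag mxE -hUB.
set Y := W *m U^t*.
have trY : \tr (Y *m A) = \sum_j e 0 j.
  rewrite /Y -mulmxA mxtrace_mulC -mulmxA AW mulmxA hU mul1mx.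
  by rewrite mxtrace_diag.
have UU : U *m U^t* = 1%:M by apply: mulmx1C.
have YY1 : Y^t* *m Y = 1%:M.
  by rewrite /Y tr_mulC trmxCK mulmxA -[U *m W^t* *m W]mulmxA hW1 mulmx1.
have YY2 : Y *m Y^t* = 1%:M by apply: mulmx1C.
clearbody Y.
have [Z [mu [hZ1 hZ2 hY]]] := normal_spec (etrans YY2 (esym YY1)).
have hmu : forall j, cmod (mu 0 j) = 1.
  move=> j; have DD : (diag_mx mu)^t* *m diag_mx mu = 1%:M.
    have Deq : Z^t* *m Y *m Z = diag_mx mu by rewrite hY conj_sandwich.
    rewrite -Deq !tr_mulC !trmxCK !mulmxA -[Z^t* *m Y^t* *m Z *m Z^t*]mulmxA hZ2 mulmx1.
    by rewrite -[Z^t* *m Y^t* *m Y]mulmxA YY1 mulmx1.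
  have := congr1 (fun M : 'M[C]_n => M j j) DD.
  rewrite /= tr_diag_mx map_diag_mx mulmx_diag !mxE eqxx mulr1n => h.
  apply: complexI; rewrite cmodE; apply/eqP; rewrite -(@sqrp_eq1 _ `|mu 0 j|) //.
  by rewrite normCKC h.
have trP : \tr P = \tr (Y *m A) by rewrite trY (trace_spec hW1 hE).
have tr2 : \tr (Y *m A) = \sum_j mu 0 j * q A (col j Z).
  rewrite hY -!mulmxA mxtrace_mulC -!mulmxA tr_diag_mul.
  by apply: eq_bigr => j _; rewrite entry_q !mulmxA.
have Pge : 0 <= \tr P by rewrite (trace_spec hW1 hE) sumr_ge0.
rewrite /trnorm -/P -cmod_ge0R // trP tr2.
apply: le_trans (cmod_sum _) _.
apply: (@le_trans _ _ (\sum_(j < n) numrad A)); last by rewrite sumr_const card_ord mulr_natl.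
apply: ler_sum => j _; rewrite cmodM hmu mul1r.
exact: numrad_ub (unit_col j hZ1).
Qed.
End S8.
Section S9.
Variable R : realType.
Local Notation C := (R[i]).
Variable n : nat.
Implicit Types (A B X P W : 'M[C]_n) (x y u v : 'cV[C]_n).
Local Notation q := (@q R n).
Local Notation nrm := (@nrm R n).
Local Notation unitv := (@unitv R n).

Lemma trnorm_scalar (c : C) : trnorm (c%:M : 'M[C]_n) = n%:R * cmod c.
Proof.
have [Ppsd P2] := absmx_spec (c%:M : 'M[C]_n); move: Ppsd P2.
set P := absmx _ => Ppsd P2.
have [W [e [hW1 hW2 hE e0]]] := psd_spec Ppsd.
have Ee : forall j, e 0 j = `|c|.
  move=> j; have : W^t* *m (P *m P) *m W = diag_mx (\row_j (e 0 j * e 0 j)).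
    by rewrite {1 2}hE diag_sq // conj_sandwich.
  rewrite P2 tr_scalar_mx map_scalar_mx -scalar_mxM.
  rewrite scalar_mxC -mulmxA hW1 mulmx1 => /(congr1 (fun M : 'M[C]_n => M j j)).
  rewrite !mxE eqxx !mulr1n /= -normCKC => h.
  apply/eqP; rewrite -(@eqrXn2 _ 2) ?e0 //; first by rewrite expr2 -h.
rewrite /trnorm -/P (trace_spec hW1 hE).
under eq_bigr do rewrite Ee.
by rewrite sumr_const card_ord -cmodE -rmorphMn /= mulr_natl.
Qed.
End S9.
Section S10.
Variable R : realType.
Local Notation C := (R[i]).
Variable n : nat.
Implicit Types (A B X P W : 'M[C]_n) (x y u v : 'cV[C]_n).
Local Notation q := (@q R n).
Local Notation nrm := (@nrm R n).
Local Notation unitv := (@unitv R n).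

Lemma sum_delta : \sum_(i < n) (delta_mx i i : 'M[C]_n) = 1%:M.
Proof.
apply/matrixP => a b; rewrite summxE (bigD1 a) //= big1 => [|i ia].
  by rewrite !mxE eqxx addr0 eq_sym.
by rewrite mxE eq_sym (negbTE ia).
Qed.

Lemma delta_conj (i : 'I_n) : (delta_mx 0 i : 'rV[C]_n)^t* = delta_mx i 0.
Proof. by apply/matrixP => a b; rewrite !mxE rmorph_nat andbC. Qed.

Lemma sandwich_delta X x (i : 'I_n) :
  (x *m delta_mx 0 i)^t* *m X *m (x *m delta_mx 0 i) = q X x *: delta_mx i i.
Proof.
have q11 : x^t* *m X *m x = (q X x)%:M by apply: mx11_scalar.
rewrite tr_mulC delta_conj -!mulmxA (mulmxA X) (mulmxA (x^t*)) (mulmxA (x^t*) X) q11.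
by rewrite mul_scalar_mx -scalemxAr mul_delta_mx.
Qed.

Lemma minimal (N : 'M[C]_n -> R) : is_Mnorm N -> (forall A, trnorm A <= N A) ->
  forall A, n%:R * numrad A <= N A.
Proof.
move=> [[N0 _ _ _] NM] Ntr A.
have [n0|npos] := posnP n.
  have -> : n%:R = 0 :> R by rewrite n0.
  by rewrite mul0r N0.
have key : forall x, unitv x -> n%:R * cmod (q A x) <= N A.
  move=> x ux; rewrite -trnorm_scalar; apply: le_trans (Ntr _) _.
  pose Cs := fun i : 'I_n => x *m delta_mx 0 i.
  have hC : \sum_i (Cs i)^t* *m Cs i = 1%:M.
    have e : forall i, (Cs i)^t* *m Cs i = delta_mx i i.
      by move=> i; rewrite -[(Cs i)^t*]mulmx1 sandwich_delta /q mulmx1 -/(nrm x) ux scale1r.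
    by under eq_bigr => i _ do rewrite e; rewrite sum_delta.
  have := NM n (fun=> A) Cs hC.
  under eq_bigr => i _ do rewrite /Cs sandwich_delta.
  rewrite -scaler_sumr sum_delta scalemx1 => h; apply: le_trans h _.
  by apply: bigmax_le => [|i _] //; exact: N0.
have n0 : (0 < n%:R :> R) by rewrite ltr0n.
rewrite -(ler_pdivlMl _ _ n0); apply: numrad_le; first by rewrite mulr_ge0 ?invr_ge0 ?ler0n ?N0.
by move=> x ux; rewrite (ler_pdivlMl _ _ n0) key.
Qed.
End S10.

Theorem theorem3p7 (R : realType) (n : nat) :
  let w := fun A : 'M[R[i]]_n => n%:R * numrad A in
  [/\ is_Mnorm w,
      (forall A, trnorm A <= w A)
    & forall N : 'M[R[i]]_n -> R,
        is_Mnorm N -> (forall A, trnorm A <= N A) -> forall A, w A <= N A].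
Proof.
move=> w; split.
- split; first split.
  + by move=> A; rewrite /w mulr_ge0 ?ler0n ?numrad_ge0.
  + move=> A; rewrite /w => /eqP; rewrite mulf_eq0 => /orP [|/eqP h].
      rewrite pnatr_eq0 => /eqP n0; apply/matrixP => i j.
      by case: i => m hm; exfalso; rewrite n0 in hm.
    exact: numrad_eq0 h.
  + by move=> c A; rewrite /w numradZ mulrCA.
  + by move=> A B; rewrite /w -mulrDr ler_wpM2l ?ler0n ?numradD.
  + move=> k X Cs hC; rewrite /w.
    apply: le_trans (ler_wpM2l (ler0n _ n) (numrad_M X hC)) _.
    rewrite (big_morph (fun x => n%:R * x) (fun a b => maxr_pMr a b (ler0n _ n)) (mulr0 _)).
    exact: lexx.
- by move=> A; apply: trnorm_le.
- by move=> N hN hT A; apply: minimal.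
Qed.
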